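(* Let $D$ be a consistent domain, $a$ an action and $(M,s)$ a state such that $\Phi_D(a,(M,s))\neq\emptyset$. Then for each $(M',s')\in(M,s)\otimes\Omega(a,(M,s))$ there exists a state in $\Phi_D(a,(M,s))$ equivalent to $(M',s')$, and conversely for each state in $\Phi_D(a,(M,s))$ there exists an equivalent state in $(M,s)\otimes\Omega(a,(M,s))$ (where $(M,s)\otimes\emptyset=\emptyset$).
   Context: Agents $\mathcal{AG}=\{1,\dots,n\}$, fluents $\mathcal F$, actions. Belief formulae: built from propositional formulae over $\mathcal F$ with $\mathbf B_i$, Boolean connectives, $\mathbf E_\alpha,\mathbf C_\alpha$ ($\emptyset\ne\alpha\subseteq\mathcal{AG}$). Kripke structure $M$: worlds $M[S]$, interpretations $M[\pi](u)\subseteq\mathcal F$, relations $M[i]$; state $(M,s)$. Standard Kripke satisfaction ($\mathbf B_i\varphi$: $\varphi$ holds at all $M[i]$-successors; $\mathbf E_\alpha\varphi$: $\mathbf B_i\varphi$ for all $i\in\alpha$; $\mathbf C_\alpha\varphi$: $\mathbf E^k_\alpha\varphi$ for all $k\ge0$). Two states are equivalent if they satisfy exactly the same belief formulae. Domain $D$: each action has exactly one ''executable $a$ if $\psi$'' and is of exactly one type: world-altering (statements ''$a$ causes $\ell$ if $\varphi$'', $\ell$ a literal), sensing (exactly one statement ''$a$ determines $f$''; the paper assumes a single sensed fluent here) or announcement (exactly one ''$a$ announces $\varphi$'', $\varphi$ fluent formula); plus ''$X$ observes $a$ if $\theta$'' and ''$X$ aware\_of $a$ if $\theta$''. $F_D(a,M,s)$,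 $P_D(a,M,s)$ are the agents whose observes (resp. aware\_of) condition holds in $(M,s)$, $O_D(a,M,s)$ the rest; for world-altering actions $P_D(a,M,s)=\emptyset$. $e_D(a,M,u)$ is the set of $\ell$ with ''$a$ causes $\ell$ if $\varphi$'' in $D$ and $(M,u)\models\varphi$. $D$ consistent: $F_D\cap P_D=\emptyset$ and each $e_D(a,M,u)$ consistent. Standing assumption: announcements are truthful, i.e. when an announcement of $\varphi$ is executable in $(M,s)$, $(M,s)\models\varphi$. $\Phi_D(a,(M,s))$ is $\emptyset$ if $a$ is not executable in $(M,s)$; otherwise a singleton $\{(M',s')\}$: (world-altering) for each $u$ with $a$ executable in $(M,u)$ a fresh world $r(a,u)$ with interpretation $M[\pi](u)$ updated by making the literals of $e_D(a,M,u)$ true; $M'$ = $M$ plus these worlds, plus $(r(a,u),r(a,v))$ for $i\in F_D$ and $(u,v)\in M[i]$, plus $(r(a,u),v)$ for $i\in O_D$ and $(u,v)\in M[i]$; $s'=r(a,s)$. (Sensing of $f$ / announcement of $\varphi$) with precondition $\psi$: take a fresh copy $c(u)$ of each $u$ with $(M,u)\models\psi$, same interpretation; for $i\in F_D$ link $c(u),c(v)$ iff $(u,v)\in M[i]$ and $u,v$ agree on $f$ (resp. on $\varphi$); for $i\in P_D$ link iff $(u,v)\in M[i]$; $M'$ is the union of $M$ and the copy, with additionally $(c(u),v)$ for $i\in O_D$ whenever $(u,v)\in M[i]$; $s'=c(s)$. Update model $\langle\Sigma,R_1,\dots,R_n,pre,sub\rangle$: events $\Sigma$, relations $R_i\subseteq\Sigma\times\Sigma$,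 $pre(e)$ a belief formula, $sub(e)$ a map $p\mapsto\varphi_p$ (identity $p\mapsto p$ when unspecified). $M\otimes\Sigma$: worlds $(u,e)$ with $(M,u)\models pre(e)$; $((u,e),(v,e'))\in(M\otimes\Sigma)[i]$ iff both are worlds, $(u,v)\in M[i]$, $(e,e')\in R_i$; $p$ true at $(u,e)$ iff $(M,u)\models sub(e)(p)$. For $\Gamma\subseteq\Sigma$, $(M,s)\otimes(\Sigma,\Gamma)=\{(M\otimes\Sigma,(s,e))\mid e\in\Gamma,(M,s)\models pre(e)\}$. $\Omega(a,(M,s))=\emptyset$ if $a$ is not executable; otherwise, with $(F,P,O)$ the frame $(F_D,P_D,O_D)(a,M,s)$ and $\psi$ the precondition: (world-altering) $\Sigma=\{\sigma,\epsilon\}$, $R_i=\{(\sigma,\sigma),(\epsilon,\epsilon)\}$ for $i\in F$, $R_i=\{(\sigma,\epsilon),(\epsilon,\epsilon)\}$ for $i\in O$, $pre(\sigma)=\psi$, $pre(\epsilon)=\top$, $sub(\epsilon)$ identity, $sub(\sigma)(p)=\Psi^+(p,a)\vee(p\wedge\neg\Psi^-(p,a))$ where $\Psi^{+}(p,a)$ (resp. $\Psi^-(p,a)$) is the disjunction of the conditions $\varphi$ of all ''$a$ causes $p$ if $\varphi$'' (resp. ''$a$ causes $\neg p$ if $\varphi$''); designated set $\{\sigma\}$. (Sensing $f$ / announcing $\varphi$) $\Sigma=\{\sigma,\tau,\epsilon\}$; $R_i=\{(\sigma,\sigma),(\tau,\tau),(\epsilon,\epsilon)\}$ for $i\in F$,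 that set plus $(\sigma,\tau),(\tau,\sigma)$ for $i\in P$, $\{(\sigma,\epsilon),(\tau,\epsilon),(\epsilon,\epsilon)\}$ for $i\in O$; $pre(\sigma)=\psi\wedge f$ (resp. $\psi\wedge\varphi$), $pre(\tau)=\psi\wedge\neg f$ (resp. $\psi\wedge\neg\varphi$), $pre(\epsilon)=\top$; all substitutions identity; designated set $\{\sigma,\tau\}$ for sensing and $\{\sigma\}$ for announcements. *)

(* Defs.v *)
From mathcomp Require Import all_boot.
From Stdlib Require List.

Set Implicit Arguments.
Unset Strict Implicit.
Unset Printing Implicit Defensive.

Inductive fform (F : Type) : Type :=
| FTop | FBot
| FAtom (p : F)
| FNot (phi : fform F)
| FAnd (phi psi : fform F)
| FOr (phi psi : fform F).
Arguments FTop {F}. Arguments FBot {F}.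

Fixpoint fsat (F : Type) (v : F -> Prop) (phi : fform F) : Prop :=
  match phi with
  | FTop => True
  | FBot => False
  | FAtom p => v p
  | FNot a => ~ fsat v a
  | FAnd a b => fsat v a /\ fsat v b
  | FOr a b => fsat v a \/ fsat v b
  end.

Inductive bform (n : nat) (F : Type) : Type :=
| BF (phi : fform F)
| BB (i : 'I_n) (phi : bform n F)
| BNot (phi : bform n F)
| BAnd (phi psi : bform n F)
| BOr (phi psi : bform n F)
| BE (al : {set 'I_n}) (h : al != set0) (phi : bform n F)
| BC (al : {set 'I_n}) (h : al != set0) (phi : bform n F).
Arguments BF {n F} phi.
Arguments BB {n F} i phi.
Arguments BNot {n F} phi.
Arguments BAnd {n F} phi psi.
Arguments BOr {n F} phi psi.
Arguments BE {n F} al h phi.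
Arguments BC {n F} al h phi.

Record kripke (n : nat) (F : Type) := Kripke {
  kW : Type;
  kpi : kW -> F -> Prop;
  kR : 'I_n -> kW -> kW -> Prop
}.
Arguments kW {n F} k.
Arguments kpi {n F} k _ _.
Arguments kR {n F} k _ _ _.

Fixpoint iterE n F (M : kripke n F) (al : {set 'I_n}) (k : nat)
  (P : kW M -> Prop) : kW M -> Prop :=
  match k with
  | 0 => P
  | k'.+1 => fun u => forall i, i \in al -> forall v, kR M i u v -> @iterE n F M al k' P v
  end.
Arguments iterE {n F} M al k P _.

Fixpoint bsat n F (M : kripke n F) (phi : bform n F) {struct phi} : kW M -> Prop :=
  match phi with
  | BF a => fun u => fsat (kpi M u) a
  | BB i a => fun u => forall v, kR M i u v -> @bsat n F M a v
  | BNot a => fun u => ~ @bsat n F M a u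
  | BAnd a b => fun u => @bsat n F M a u /\ @bsat n F M b u
  | BOr a b => fun u => @bsat n F M a u \/ @bsat n F M b u
  | BE al _ a => fun u => forall i, i \in al -> forall v, kR M i u v -> @bsat n F M a v
  | BC al _ a => fun u => forall k, @iterE n F M al k (@bsat n F M a) u
  end.
Arguments bsat {n F} M phi _.

Record state (n : nat) (F : Type) := State { sM : kripke n F; sw : kW sM }.
Arguments sM {n F} s.
Arguments sw {n F} s.

Definition st_equiv n F (s1 s2 : state n F) : Prop :=
  forall phi : bform n F, bsat (sM s1) phi (sw s1) <-> bsat (sM s2) phi (sw s2).

(* literals are pairs (p, b): (p,true) = p, (p,false) = ~p *)
Inductive akind (n : nat) (F : finType) : Type :=
| WorldAlt (causes : seq ((F * bool) * bform n F))   (* "a causes l if phi" *)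
| Sensing (f : F)
| Announce (phi : fform F).
Arguments WorldAlt {n F} causes.
Arguments Sensing {n F} f.
Arguments Announce {n F} phi.

Record domain (n : nat) (F : finType) (Act : Type) := Domain {
  dexec : Act -> bform n F;
  dkind : Act -> akind n F;
  dobs : Act -> seq ({set 'I_n} * bform n F);            (* "X observes a if theta" *)
  daware : Act -> seq ({set 'I_n} * bform n F)           (* "X aware_of a if theta" *)
}.

Section Frames.
Context {n : nat} {F : finType} {Act : Type}.
Local Unset Implicit Arguments.

Definition FD (D : domain n F Act) (a : Act) (M : kripke n F) (s : kW M) (i : 'I_n) : Prop :=
  exists X theta, List.In (X, theta) (dobs D a) /\ i \in X /\ bsat M theta s.

Definition PD (D : domain n F Act) (a : Act) (M : kripke n F) (s : kW M) (i : 'I_n) : Prop :=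
  match dkind D a with
  | WorldAlt _ => False
  | _ => exists X theta, List.In (X, theta) (daware D a) /\ i \in X /\ bsat M theta s
  end.

Definition OD (D : domain n F Act) (a : Act) (M : kripke n F) (s : kW M) (i : 'I_n) : Prop :=
  ~ FD D a M s i /\ ~ PD D a M s i.

Definition eff (D : domain n F Act) (a : Act) (M : kripke n F) (u : kW M) (l : F * bool) : Prop :=
  match dkind D a with
  | WorldAlt cs => exists phi, List.In (l, phi) cs /\ bsat M phi u
  | _ => False
  end.

Definition consistent (D : domain n F Act) : Prop :=
  forall (a : Act) (M : kripke n F),
    (forall s i, ~ (FD D a M s i /\ PD D a M s i)) /\
    (forall u p, ~ (eff D a M u (p, true) /\ eff D a M u (p, false))).

Definition truthful (D : domain n F Act) : Prop :=
  forall a phi, dkind D a = Announce phi ->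
  forall (M : kripke n F) (s : kW M), bsat M (dexec D a) s -> fsat (kpi M s) phi.

Definition exW (D : domain n F Act) (a : Act) (M : kripke n F) :=
  {u : kW M | bsat M (dexec D a) u}.

Definition phi_pi (D : domain n F Act) (a : Act) (M : kripke n F)
  (x : kW M + exW D a M) (p : F) : Prop :=
  match x with
  | inl u => kpi M u p
  | inr u =>
      match dkind D a with
      | WorldAlt _ => eff D a M (proj1_sig u) (p, true) \/
                      (kpi M (proj1_sig u) p /\ ~ eff D a M (proj1_sig u) (p, false))
      | _ => kpi M (proj1_sig u) p
      end
  end.

Definition phi_R (D : domain n F Act) (a : Act) (M : kripke n F) (s : kW M)
  (i : 'I_n) (x y : kW M + exW D a M) : Prop :=
  match x, y with
  | inl u, inl v => kR M i u v
  | inr u, inr v =>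
      match dkind D a with
      | WorldAlt _ => FD D a M s i /\ kR M i (proj1_sig u) (proj1_sig v)
      | Sensing f =>
          (FD D a M s i /\ kR M i (proj1_sig u) (proj1_sig v) /\
             (kpi M (proj1_sig u) f <-> kpi M (proj1_sig v) f)) \/
          (PD D a M s i /\ kR M i (proj1_sig u) (proj1_sig v))
      | Announce phi =>
          (FD D a M s i /\ kR M i (proj1_sig u) (proj1_sig v) /\
             (fsat (kpi M (proj1_sig u)) phi <-> fsat (kpi M (proj1_sig v)) phi)) \/
          (PD D a M s i /\ kR M i (proj1_sig u) (proj1_sig v))
      end
  | inr u, inl v => OD D a M s i /\ kR M i (proj1_sig u) v
  | inl _, inr _ => False
  end.

Definition phi_model (D : domain n F Act) (a : Act) (M : kripke n F) (s : kW M)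
  : kripke n F :=
  @Kripke n F (kW M + exW D a M) (phi_pi D a M) (phi_R D a M s).

(* Phi_D(a,(M,s)) as a set of states (empty or a singleton) *)
Definition Phi (D : domain n F Act) (a : Act) (st : state n F) : state n F -> Prop :=
  fun st' => exists h : bsat (sM st) (dexec D a) (sw st),
    st' = @State n F (phi_model D a (sM st) (sw st))
            (inr (exist _ (sw st) h) : kW (phi_model D a (sM st) (sw st))).

Record umodel := UModel {
  uE : Type;
  uR : 'I_n -> uE -> uE -> Prop;
  upre : uE -> bform n F;
  usub : uE -> F -> bform n F
}.

Definition prodW (M : kripke n F) (U : umodel) :=
  {x : kW M * uE U | bsat M (upre U x.2) x.1}.

Definition prod_kripke (M : kripke n F) (U : umodel) : kripke n F :=
  @Kripke n F (prodW M U)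
    (fun x p => bsat M (usub U (proj1_sig x).2 p) (proj1_sig x).1)
    (fun i x y => kR M i (proj1_sig x).1 (proj1_sig y).1 /\ uR U i (proj1_sig x).2 (proj1_sig y).2).

(* (M,s) (x) (Sigma, Gamma) as a set of states *)
Definition prod_states (M : kripke n F) (s : kW M) (U : umodel) (G : uE U -> Prop)
  : state n F -> Prop :=
  fun st' => exists (e : uE U) (h : bsat M (upre U e) s),
    G e /\ st' = @State n F (prod_kripke M U)
                   (exist (fun x : kW M * uE U => bsat M (upre U x.2) x.1) (s, e) h).

Record pumodel := PUM { pU : umodel; pG : uE pU -> Prop }.

Inductive ev2 := E2sig | E2eps.
Inductive ev3 := E3sig | E3tau | E3eps.

Definition BBot : bform n F := BF FBot.
Definition BTop : bform n F := BF FTop.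

Definition Psi (cs : seq ((F * bool) * bform n F)) (l : F * bool) : bform n F :=
  foldr (fun c acc => if c.1 == l then BOr c.2 acc else acc) BBot cs.

Definition omega_wa (cs : seq ((F * bool) * bform n F)) (Fr Or : 'I_n -> Prop)
  (psi : bform n F) : umodel :=
  @UModel ev2
    (fun i x y => (Fr i /\ x = y) \/ (Or i /\ y = E2eps))
    (fun e => match e with E2sig => psi | E2eps => BTop end)
    (fun e p => match e with
                | E2sig => BOr (Psi cs (p, true))
                               (BAnd (BF (FAtom p)) (BNot (Psi cs (p, false))))
                | E2eps => BF (FAtom p)
                end).

Definition omega_so (Fr Pr Or : 'I_n -> Prop) (psi : bform n F) (chi : fform F)
  : umodel :=
  @UModel ev3
    (fun i x y => (Fr i /\ x = y) \/
                  (Pr i /\ (x = y \/ (x = E3sig /\ y = E3tau) \/ (x = E3tau /\ y = E3sig))) \/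
                  (Or i /\ y = E3eps))
    (fun e => match e with
              | E3sig => BAnd psi (BF chi)
              | E3tau => BAnd psi (BNot (BF chi))
              | E3eps => BTop
              end)
    (fun e p => BF (FAtom p)).

Definition omega_pum (D : domain n F Act) (a : Act) (M : kripke n F) (s : kW M)
  : pumodel :=
  match dkind D a with
  | WorldAlt cs =>
      @PUM (omega_wa cs (FD D a M s) (OD D a M s) (dexec D a))
           (fun e : ev2 => e = E2sig)
  | Sensing f =>
      @PUM (omega_so (FD D a M s) (PD D a M s) (OD D a M s) (dexec D a) (FAtom f))
           (fun e : ev3 => e = E3sig \/ e = E3tau)
  | Announce phi =>
      @PUM (omega_so (FD D a M s) (PD D a M s) (OD D a M s) (dexec D a) phi)
           (fun e : ev3 => e = E3sig)
  end.

(* Omega(a,(M,s)) as a set of pointed update models (empty or a singleton) *)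
Definition Omega (D : domain n F Act) (a : Act) (st : state n F) : pumodel -> Prop :=
  fun p => bsat (sM st) (dexec D a) (sw st) /\ p = omega_pum D a (sM st) (sw st).

(* (M,s) (x) Omega(a,(M,s)), with (M,s) (x) emptyset = emptyset *)
Definition OmegaProd (D : domain n F Act) (a : Act) (st : state n F) : state n F -> Prop :=
  fun st' => exists p, Omega D a st p /\ prod_states (sM st) (sw st) (pU p) (pG p) st'.

End Frames.

(* Main.v *)
Require Import Defs.
From mathcomp Require Import all_boot.
From Stdlib Require Import Classical.

Section Bis.
Variables (n : nat) (F : finType).

Definition bisim (M1 M2 : kripke n F) (Z : kW M1 -> kW M2 -> Prop) :=
  (forall u v, Z u v -> forall p, kpi M1 u p <-> kpi M2 v p) /\
  (forall i u v u', Z u v -> kR M1 i u u' -> exists v', kR M2 i v v' /\ Z u' v') /\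
  (forall i u v v', Z u v -> kR M2 i v v' -> exists u', kR M1 i u u' /\ Z u' v').

Lemma fsat_ext (v1 v2 : F -> Prop) (phi : fform F) :
  (forall p, v1 p <-> v2 p) -> (fsat v1 phi <-> fsat v2 phi).
Proof.
move=> H; elim: phi => /=; try tauto.
Qed.

Lemma bisim_iterE M1 M2 Z (B : bisim M1 M2 Z) al k :
  forall (P1 : kW M1 -> Prop) (P2 : kW M2 -> Prop),
  (forall u v, Z u v -> (P1 u <-> P2 v)) ->
  forall u v, Z u v -> (iterE M1 al k P1 u <-> iterE M2 al k P2 v).
Proof.
case: B => [_ [Bf Bb]].
elim: k => [|k IH] P1 P2 HP u v Z0 /=; first exact: HP.
split=> H i Hi.
- move=> v' R2; have [u' [R1 Zu]] := Bb _ _ _ _ Z0 R2.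
  by apply/(IH _ _ HP _ _ Zu); apply: H R1.
- move=> u' R1; have [v' [R2 Zv]] := Bf _ _ _ _ Z0 R1.
  by apply/(IH _ _ HP _ _ Zv); apply: H R2.
Qed.

Lemma bisim_bsat M1 M2 Z (B : bisim M1 M2 Z) (phi : bform n F) :
  forall u v, Z u v -> (bsat M1 phi u <-> bsat M2 phi v).
Proof.
have B' := B; case: B' => [Ba [Bf Bb]].
elim: phi => [phi|i phi IH|phi IH|phi IH psi IH'|phi IH psi IH'|al h phi IH|al h phi IH] u v Z0 /=.
- exact: fsat_ext (Ba _ _ Z0).
- split=> H v' R.
  + have [u' [R1 Zu]] := Bb _ _ _ _ Z0 R; by apply/(IH _ _ Zu); apply: H.
  + have [v'' [R2 Zv]] := Bf _ _ _ _ Z0 R; by apply/(IH _ _ Zv); apply: H.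
- by rewrite (IH _ _ Z0).
- by rewrite (IH _ _ Z0) (IH' _ _ Z0).
- by rewrite (IH _ _ Z0) (IH' _ _ Z0).
- split=> H j Hj v' R.
  + have [u' [R1 Zu]] := Bb _ _ _ _ Z0 R; by apply/(IH _ _ Zu); apply: H R1.
  + have [v'' [R2 Zv]] := Bf _ _ _ _ Z0 R; by apply/(IH _ _ Zv); apply: H R2.
- split=> H k.
  + have E := @bisim_iterE M1 M2 Z B al k (bsat M1 phi) (bsat M2 phi) IH u v Z0. exact: (proj1 E (H k)).
  + have E := @bisim_iterE M1 M2 Z B al k (bsat M1 phi) (bsat M2 phi) IH u v Z0. exact: (proj2 E (H k)).
Qed.

Lemma Psi_eff (M : kripke n F) (cs : seq ((F * bool) * bform n F)) l u :
  bsat M (Psi cs l) u <-> exists phi, List.In (l, phi) cs /\ bsat M phi u.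
Proof.
elim: cs => [|[l' p] cs IH] /=.
  by split=> [[]|[? [[]]]].
case: eqP => [->|ne] /=.
- rewrite IH; split=> [[H|[q [Hq Hb]]]|[q [[[<-]|Hq] Hb]]]; eauto.
- rewrite IH; split=> [[q [Hq Hb]]|[q [[[E _]|Hq] Hb]]]; eauto.
  by case: ne.
Qed.
End Bis.

Section Act.
Variables (n : nat) (F : finType) (Act : Type) (D : domain n F Act) (a : Act)
  (M : kripke n F) (s : kW M).

Definition Uwa cs := omega_wa cs (FD D a M s) (OD D a M s) (dexec D a).

Definition Zwa cs (w : kW (prod_kripke M (Uwa cs))) (z : kW (phi_model D a M s)) : Prop :=
  match z with
  | inl v => (proj1_sig w).2 = E2eps /\ (proj1_sig w).1 = v
  | inr v => (proj1_sig w).2 = E2sig /\ (proj1_sig w).1 = proj1_sig v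
  end.

Lemma bisim_wa cs (Hk : dkind D a = WorldAlt cs) :
  @bisim n F _ _ (@Zwa cs).
Proof.
split; [|split].
- move=> [[u e] h] [v|[v hv]] /= [-> ->] p.
  + by [].
  + rewrite /phi_pi /eff Hk /= !Psi_eff; by [].
- move=> i [[u e] h] z [[u' e'] h'] /=.
  case: z => [v|[v hv]] /= [E1 E2] [R U]; subst.
  + case: U => [[_ E]|[_ E]]; subst e'.
    * by exists (inl u'); split.
    * by exists (inl u'); split.
  + case: e' h' U => h' U.
    * exists (inr (exist _ u' h')); split=> //=.
      rewrite /phi_R Hk /=; case: U => [[Hf _]|[_ E]] //; by split.
    * exists (inl u'); split=> //=.
      case: U => [[_ E]|[Ho _]] //; by split.
- move=> i [[u e] h] z z' /=.
  case: z => [v|[v hv]] /= [E1 E2]; subst.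
  + case: z' => [v'|[v' hv']] /= R.
    * exists (exist _ (v', E2eps) I); split=> //=; split=> //.
      case: (classic (FD D a M s i)) => Hf; first by left.
      right; split=> //; split=> //; by rewrite /PD Hk.
    * by [].
  + case: z' => [v'|[v' hv']] /= R.
    * case: R => Ho R.
      exists (exist _ (v', E2eps) I); split=> //=; split=> //; by right.
    * move: R; rewrite /phi_R Hk /= => -[Hf R].
      exists (exist (fun x : kW M * ev2 => bsat M (upre (Uwa cs) x.2) x.1) (v', E2sig) hv').
      split=> //=; split=> //; by left.
Qed.
End Act.

Section Act.
Variables (n : nat) (F : finType) (Act : Type) (D : domain n F Act) (a : Act)
  (M : kripke n F) (s : kW M) (chi : fform F).

Definition Uso := omega_so (FD D a M s) (PD D a M s) (OD D a M s) (dexec D a) chi.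

Definition Zso (w : kW (prod_kripke M Uso)) (z : kW (phi_model D a M s)) : Prop :=
  match z with
  | inl v => (proj1_sig w).2 = E3eps /\ (proj1_sig w).1 = v
  | inr v => ((proj1_sig w).2 = E3sig \/ (proj1_sig w).2 = E3tau) /\ (proj1_sig w).1 = proj1_sig v
  end.

Hypothesis Hpi : forall x p, phi_pi D a M (inr x) p <-> kpi M (proj1_sig x) p.
Hypothesis HR : forall i x y, phi_R D a M s i (inr x) (inr y) <->
  (FD D a M s i /\ kR M i (proj1_sig x) (proj1_sig y) /\
     (fsat (kpi M (proj1_sig x)) chi <-> fsat (kpi M (proj1_sig y)) chi)) \/
  (PD D a M s i /\ kR M i (proj1_sig x) (proj1_sig y)).
Hypothesis HD : forall i, ~ (FD D a M s i /\ PD D a M s i).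

Lemma bisim_so : @bisim n F _ _ Zso.
Proof.
split; [|split].
- move=> [[u e] h] [v|[v hv]] /= [E ->] p.
  + by [].
  + exact: (iff_sym (Hpi (exist _ v hv) p)).
- move=> i [[u e] h] z [[u' e'] h'] /=.
  case: z => [v|[v hv]] /= [E1 E2] [R U]; subst.
  + case: U => [[_ E]|[[_ [E|[[E _]|[E _]]]]|[_ E]]]; try discriminate; subst e';
      by exists (inl u'); split.
  + case: e' h' U => h' U.
    * exists (inr (exist _ u' (proj1 h'))); split=> /=; last by split; [left|].
      apply: (proj2 (HR i (exist _ v hv) (exist _ u' (proj1 h')))) => /=.
      case: U => [[Hf E]|[[Hp _]|[_ E]]] //; [left|right] => //.
      case: E1 => ?; subst e => //; simpl in h; simpl in h'.
      split=> //; split=> //; tauto.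
    * exists (inr (exist _ u' (proj1 h'))); split=> /=; last by split; [right|].
      apply: (proj2 (HR i (exist _ v hv) (exist _ u' (proj1 h')))) => /=.
      case: U => [[Hf E]|[[Hp _]|[_ E]]] //; [left|right] => //.
      case: E1 => ?; subst e => //; simpl in h; simpl in h'.
      split=> //; split=> //; tauto.
    * exists (inl u'); split=> //=.
      case: U => [[_ E]|[[_ [E|[[E E']|[E E']]]]|[Ho _]]]; try discriminate;
        try by (subst; case: E1).
- move=> i [[u e] h] z z' /=.
  case: z => [v|[v hv]] /= [E1 E2]; subst.
  + case: z' => [v'|[v' hv']] /= R.
    * exists (exist _ (v', E3eps) I); split=> //=; split=> //.
      case: (classic (FD D a M s i)) => Hf; first by left.
      case: (classic (PD D a M s i)) => Hp; first by right; left; split=> //; left.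
      by right; right.
    * by [].
  + case: z' => [v'|[v' hv']] /= R.
    * case: R => Ho R.
      exists (exist _ (v', E3eps) I); split=> //=; split=> //; by right; right.
    * move: (proj1 (HR i (exist _ v hv) (exist _ v' hv')) R) => /= {}R.
      case: (classic (fsat (kpi M v') chi)) => Hc.
      - exists (exist (fun x : kW M * ev3 => bsat M (upre Uso x.2) x.1) (v', E3sig) (conj hv' Hc)).
        split=> /=; last by split=> //; left.
        case: R => [[Hf [R Hcc]]|[Hp R]]; split=> //.
        + left; split=> //; case: E1 => ?; subst e => //; simpl in h; tauto.
        + right; left; split=> //; case: E1 => ?; subst e; tauto.
      - exists (exist (fun x : kW M * ev3 => bsat M (upre Uso x.2) x.1) (v', E3tau) (conj hv' Hc)).
        split=> /=; last by split=> //; right.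
        case: R => [[Hf [R Hcc]]|[Hp R]]; split=> //.
        + left; split=> //; case: E1 => ?; subst e => //; simpl in h; tauto.
        + right; left; split=> //; case: E1 => ?; subst e; tauto.
Qed.
End Act.

Arguments bisim_bsat {n F M1 M2 Z} B phi u v.
Arguments Uwa {n F Act} D a M s cs.
Arguments Uso {n F Act} D a M s chi.
Arguments bisim_wa {n F Act D a M s cs} Hk.
Arguments bisim_so {n F Act D a M s chi} Hpi HR.

Theorem proposition5 (n : nat) (F : finType) (Act : Type)
  (D : domain n F Act) (a : Act) (st : state n F) :
  consistent D -> truthful D ->
  (exists st', Phi D a st st') ->
  (forall st', OmegaProd D a st st' -> exists st'', Phi D a st st'' /\ st_equiv st' st'') /\
  (forall st', Phi D a st st' -> exists st'', OmegaProd D a st st'' /\ st_equiv st' st'').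
Proof.
move=> Hcons Htr [st0 [hex _]].
case: st hex => M s /= hex.
have Hpi_s : forall f, dkind D a = Sensing f ->
   forall x p, phi_pi D a M (inr x) p <-> kpi M (proj1_sig x) p.
  by move=> f Hk x p; rewrite /phi_pi Hk.
have HR_s : forall f, dkind D a = Sensing f -> forall i x y,
  phi_R D a M s i (inr x) (inr y) <->
  (FD D a M s i /\ kR M i (proj1_sig x) (proj1_sig y) /\
     (fsat (kpi M (proj1_sig x)) (FAtom f) <-> fsat (kpi M (proj1_sig y)) (FAtom f))) \/
  (PD D a M s i /\ kR M i (proj1_sig x) (proj1_sig y)).
  by move=> f Hk i x y; rewrite /phi_R Hk.
have Hpi_a : forall phi, dkind D a = Announce phi ->
   forall x p, phi_pi D a M (inr x) p <-> kpi M (proj1_sig x) p.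
  by move=> phi Hk x p; rewrite /phi_pi Hk.
have HR_a : forall phi, dkind D a = Announce phi -> forall i x y,
  phi_R D a M s i (inr x) (inr y) <->
  (FD D a M s i /\ kR M i (proj1_sig x) (proj1_sig y) /\
     (fsat (kpi M (proj1_sig x)) phi <-> fsat (kpi M (proj1_sig y)) phi)) \/
  (PD D a M s i /\ kR M i (proj1_sig x) (proj1_sig y)).
  by move=> phi Hk i x y; rewrite /phi_R Hk.
split.
- move=> st' [p [[_ ->] Hprod]].
  exists (State (inr (exist _ s hex) : kW (phi_model D a M s))).
  split; first by exists hex.
  move: Hprod; rewrite /omega_pum.
  case Hk: (dkind D a) => [cs|f|phi] /= [e [h [Ge ->]]] phi0 /=.
  + apply: (bisim_bsat (bisim_wa Hk)) => /=; by split.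
  + apply: (bisim_bsat (bisim_so (Hpi_s f Hk) (HR_s f Hk))) => /=; by split.
  + apply: (bisim_bsat (bisim_so (Hpi_a phi Hk) (HR_a phi Hk))) => /=; split=> //; by left.
- move=> st' [h ->] /=.
  case Hk: (dkind D a) => [cs|f|phi].
  + exists (State (exist (fun x : kW M * ev2 => bsat M (upre (Uwa D a M s cs) x.2) x.1) (s, E2sig) h
             : kW (prod_kripke M (Uwa D a M s cs)))).
    split.
    * exists (omega_pum D a M s); split; first by split.
      rewrite /omega_pum Hk /=; by exists E2sig, h.
    * move=> phi0 /=; symmetry; apply: (bisim_bsat (bisim_wa Hk)) => /=; by split.
  + case: (classic (kpi M s f)) => Hc.
    * exists (State (exist (fun x : kW M * ev3 => bsat M (upre (Uso D a M s (FAtom f)) x.2) x.1)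
               (s, E3sig) (conj h Hc) : kW (prod_kripke M (Uso D a M s (FAtom f))))).
      split.
      - exists (omega_pum D a M s); split; first by split.
        rewrite /omega_pum Hk /=; exists E3sig, (conj h Hc); by split; [left|].
      - move=> phi0 /=; symmetry.
        apply: (bisim_bsat (bisim_so (Hpi_s f Hk) (HR_s f Hk))) => /=; split=> //; by left.
    * exists (State (exist (fun x : kW M * ev3 => bsat M (upre (Uso D a M s (FAtom f)) x.2) x.1)
               (s, E3tau) (conj h Hc) : kW (prod_kripke M (Uso D a M s (FAtom f))))).
      split.
      - exists (omega_pum D a M s); split; first by split.
        rewrite /omega_pum Hk /=; exists E3tau, (conj h Hc); by split; [right|].
      - move=> phi0 /=; symmetry.
        apply: (bisim_bsat (bisim_so (Hpi_s f Hk) (HR_s f Hk))) => /=; split=> //; by right.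
  + have Hc := Htr a phi Hk M s h.
    exists (State (exist (fun x : kW M * ev3 => bsat M (upre (Uso D a M s phi) x.2) x.1)
               (s, E3sig) (conj h Hc) : kW (prod_kripke M (Uso D a M s phi)))).
    split.
    * exists (omega_pum D a M s); split; first by split.
      rewrite /omega_pum Hk /=; by exists E3sig, (conj h Hc).
    * move=> phi0 /=; symmetry.
      apply: (bisim_bsat (bisim_so (Hpi_a phi Hk) (HR_a phi Hk))) => /=; split=> //; by left.
Qed.
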